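(* Let $J\subseteq\Sigma$ and $c\in\mathbf{Z}^\Sigma$ with $c_\tau\in[1,p-1]$ for all $\tau$. Then $r=r(J,c)$ (defined using any admissible choice of $\tau_0$, if a choice is needed) satisfies $r_\tau\in[1,p]$ for all $\tau\in\Sigma$ and, for every $\tau\in\Sigma$, \[\sum_{i=0}^{f-1}(-1)^{\tau\circ\varphi^i\notin J}\,r_{\tau\circ\varphi^i}\,p^i\equiv\Omega_{\tau,c}\pmod{p^f-1}.\]
   Context: Let $p$ be a prime, $k$ a finite field of degree $f$ over $\mathbf{F}_p$, $\Sigma=\mathrm{Hom}_{\mathbf{F}_p}(k,\overline{\mathbf{F}}_p)$, $\varphi(x)=x^p$ on $k$ (so $\Sigma=\{\tau\circ\varphi^i:0\le i<f\}$). For $a\in\mathbf{Z}^\Sigma$, $\Omega_{\tau,a}=\sum_{i=0}^{f-1}p^ia_{\tau\circ\varphi^i}$. For $J\subseteq\Sigma$, $(-1)^{\tau\notin J}$ is $-1$ if $\tau\notin J$ and $1$ if $\tau\in J$. The map $\delta_J\colon\mathbf{Z}^\Sigma\times\Sigma\to\mathbf{Z}^\Sigma$: given $(x,\tau)$, let $y=\delta_J(x,\tau)$. If $1\le x_\tau\le p$, $y=x$. If $x_\tau\le0$: $y_\tau=x_\tau+p$, $y_{\tau\circ\varphi}=x_{\tau\circ\varphi}-1$ if $\tau\circ\varphi\notin J$ and $x_{\tau\circ\varphi}+1$ if $\tau\circ\varphi\in J$, and $y_\kappa=x_\kappa$ for other $\kappa$. If $x_\tau>p$: $y_\tau=x_\tau-p$,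 $y_{\tau\circ\varphi}=x_{\tau\circ\varphi}-1$ if $\tau\circ\varphi\notin J$ and $x_{\tau\circ\varphi}+1$ if $\tau\circ\varphi\in J$, and $y_\kappa=x_\kappa$ for other $\kappa$. The vector $r(J,c)$ for $c_\tau\in[1,p-1]$: define $y_0\in\mathbf{Z}^\Sigma$ by $y_{0,\tau}=c_\tau$ if $\tau\in J,\tau\circ\varphi^{-1}\in J$; $c_\tau+1$ if $\tau\in J,\tau\circ\varphi^{-1}\notin J$; $p-c_\tau$ if $\tau\notin J,\tau\circ\varphi^{-1}\in J$; $p-1-c_\tau$ if $\tau\notin J,\tau\circ\varphi^{-1}\notin J$. If $y_{0,\tau}>0$ for all $\tau$, $r(J,c)=y_0$. Otherwise choose $\tau_0$ with $y_{0,\tau_0}=0$, define $y_\kappa=\delta_J(y_{\kappa-1},\tau_0\circ\varphi^{\kappa-1})$ for $\kappa=1,\dots,f$, and set $r(J,c)=y_f$. *)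

(* Defs.v *)
From mathcomp Require Import all_boot all_order all_algebra.
Set Implicit Arguments. Unset Strict Implicit. Unset Printing Implicit Defensive.
Import Order.TTheory GRing.Theory Num.Theory.
Local Open Scope ring_scope.

(* Sigma = Hom(k, Fpbar) with f = [k:F_p] is modelled as 'I_f, with a fixed
   tau as 0 and tau o phi^i as i; precomposition with phi is the cyclic
   successor ordS, with phi^{-1} the cyclic predecessor ord_pred. *)

Definition phis (f : nat) (i : nat) (t : 'I_f) : 'I_f := iter i (@ordS f) t.

Definition Omega (p f : nat) (t : 'I_f) (a : 'I_f -> int) : int :=
  \sum_(i < f) (p%:Z ^+ i) * a (phis i t).

Definition sgnJ (f : nat) (J : {set 'I_f}) (t : 'I_f) : int :=
  if t \in J then 1 else -1.

(* The two modifications are applied successively (first at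
   tau, then at tau o phi); for f >= 2 this is exactly the paper's definition,
   and for f = 1 (tau o phi = tau) it is the cumulative reading. *)
Definition delta (p f : nat) (J : {set 'I_f}) (x : 'I_f -> int) (t : 'I_f)
  : 'I_f -> int :=
  let t1 := ordS t in
  let corr : int := if t1 \in J then 1 else -1 in
  if (1 <= x t) && (x t <= p%:Z) then x
  else
    let y1 := fun k => if k == t then
                         (if x t <= 0 then x t + p%:Z else x t - p%:Z)
                       else x k in
    fun k => if k == t1 then y1 k + corr else y1 k.

Fixpoint delta_iter (p f : nat) (J : {set 'I_f}) (n : nat) (x : 'I_f -> int)
  (t : 'I_f) : 'I_f -> int :=
  match n with
  | 0 => x
  | n'.+1 => delta_iter p J n' (delta p J x t) (ordS t)
  end.

Definition y0 (p f : nat) (J : {set 'I_f}) (c : 'I_f -> int) : 'I_f -> int :=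
  fun t =>
    let tm := ord_pred t in
    if t \in J then (if tm \in J then c t else c t + 1)
    else (if tm \in J then p%:Z - c t else p%:Z - 1 - c t).

Definition rJc (p f : nat) (J : {set 'I_f}) (c : 'I_f -> int) (t0 : 'I_f)
  : 'I_f -> int :=
  if [forall t, 0 < y0 p J c t] then y0 p J c
  else delta_iter p J f (y0 p J c) t0.

(* Main.v *)
Require Import Defs.
From mathcomp Require Import all_boot all_order all_algebra zify ring.
Import Order.TTheory GRing.Theory Num.Theory.
Local Open Scope ring_scope.
Set Implicit Arguments. Unset Strict Implicit.

Lemma val_ordS (f : nat) (s : 'I_f) :
  nat_of_ord (ordS s) = if (s.+1 < f)%N then s.+1 else 0%N.
Proof.
rewrite /ordS /=; case: ifP => h; first by rewrite modn_small.
have e : s.+1 = f by have := ltn_ord s; lia.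
by rewrite e modnn.
Qed.

Lemma phisS f i (t : 'I_f) : phis i.+1 t = ordS (phis i t).
Proof. by []. Qed.

Lemma phisSr f i (t : 'I_f) : phis i (ordS t) = phis i.+1 t.
Proof. by rewrite /phis iterSr. Qed.

Lemma val_phis f i (t : 'I_f) : (i <= f)%N ->
  nat_of_ord (phis i t) = if (t + i < f)%N then (t + i)%N else (t + i - f)%N.
Proof.
elim: i => [|i IH] hi; first by rewrite addn0 ltn_ord.
rewrite phisS val_ordS IH; last lia.
have := ltn_ord t; case: ifP; case: ifP; case: ifP; lia.
Qed.

Lemma phis_inj f i j (t : 'I_f) : (i < f)%N -> (j < f)%N ->
  phis i t = phis j t -> i = j.
Proof.
move=> hi hj /(congr1 (@nat_of_ord f)); rewrite !val_phis; try lia.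
have := ltn_ord t; case: ifP; case: ifP; lia.
Qed.

Lemma phis_f f (t : 'I_f) : phis f t = t.
Proof. apply: val_inj; rewrite /= val_phis //; have := ltn_ord t; case: ifP; lia. Qed.

Definition idx f (u s : 'I_f) : nat :=
  if (s + f - u < f)%N then (s + f - u)%N else (s + f - u - f)%N.

Lemma idx_lt f (u s : 'I_f) : (idx u s < f)%N.
Proof. rewrite /idx; have := ltn_ord s; have := ltn_ord u; case: ifP; lia. Qed.

Lemma phis_idx f (u s : 'I_f) : phis (idx u s) u = s.
Proof.
apply: val_inj; rewrite /= val_phis; last exact: ltnW (idx_lt u s).
rewrite /idx; have := ltn_ord s; have := ltn_ord u; case: ifP; case: ifP; lia.
Qed.

Lemma idx_phis f i (u : 'I_f) : (i < f)%N -> idx u (phis i u) = i.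
Proof.
move=> hi; apply: (@phis_inj f _ _ u) => //; first exact: idx_lt.
by rewrite phis_idx.
Qed.

Lemma idx_ordS f (u s : 'I_f) :
  idx u (ordS s) = (idx u s).+1 \/ (idx u (ordS s) = 0%N /\ (idx u s).+1 = f).
Proof.
rewrite /idx val_ordS; have := ltn_ord s; have := ltn_ord u.
case: ifP; case: ifP; case: ifP; lia.
Qed.
Definition W (p f : nat) (J : {set 'I_f}) (u : 'I_f) (x : 'I_f -> int) : int :=
  \sum_(i < f) sgnJ J (phis i u) * x (phis i u) * p%:Z ^+ i.

Lemma reidx f (u : 'I_f) (G : 'I_f -> nat -> int) :
  \sum_(i < f) G (phis i u) i = \sum_(s : 'I_f) G s (idx u s).
Proof.
rewrite [RHS](reindex_inj (h := fun i : 'I_f => phis i u)) /=.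
  by apply: eq_bigr => i _ /=; rewrite idx_phis.
by move=> i j /phis_inj; move=> /(_ (ltn_ord i) (ltn_ord j)) /val_inj.
Qed.

Lemma W_re p f J (u : 'I_f) x :
  W p J u x = \sum_(s : 'I_f) sgnJ J s * x s * p%:Z ^+ (idx u s).
Proof. exact: (reidx u (fun s i => sgnJ J s * x s * p%:Z ^+ i)). Qed.

Lemma Omega_re p f (u : 'I_f) c :
  Omega p u c = \sum_(s : 'I_f) c s * p%:Z ^+ (idx u s).
Proof.
rewrite /Omega (reidx u (fun s i => p%:Z ^+ i * c s)).
by apply: eq_bigr => s _; rewrite mulrC.
Qed.

Lemma keyK (p f : nat) (u s : 'I_f) :
  (p%:Z ^+ f - 1 %| p%:Z ^+ idx u (ordS s) - p%:Z * p%:Z ^+ idx u s)%Z.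
Proof.
case: (idx_ordS u s) => [->|[-> e]]; first by rewrite exprS subrr rpred0.
by rewrite -exprS e expr0 -opprB rpredN dvdzz.
Qed.

Lemma dvdz_sumr (d : int) (I : finType) (F : I -> int) :
  (forall i, (d %| F i)%Z) -> (d %| \sum_i F i)%Z.
Proof.
move=> h; exact: rpred_sum.
Qed.

Lemma sum_pick (f : nat) (t : 'I_f) (a : int) :
  \sum_(s : 'I_f) (if s == t then a else 0) = a.
Proof. by rewrite -big_mkcond big_pred1_eq. Qed.

Lemma step_cong (p f : nat) (J : {set 'I_f}) (x : 'I_f -> int) (t u : 'I_f) :
  (x t <= 0 -> t \notin J) -> (p%:Z < x t -> t \in J) ->
  (p%:Z ^+ f - 1 %| W p J u (delta p J x t) - W p J u x)%Z.
Proof.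
move=> hn hP; rewrite !W_re /delta /=; case: ifP => hr; first by rewrite subrr rpred0.
rewrite -sumrB.
set A := (if x t <= 0 then x t + p%:Z else x t - p%:Z).
set cr := (if ordS t \in J then 1 else -1 : int).
have E : forall s : 'I_f,
  sgnJ J s * (if s == ordS t then (if s == t then A else x s) + cr
              else (if s == t then A else x s)) * p%:Z ^+ idx u s
  - sgnJ J s * x s * p%:Z ^+ idx u s
  = (if s == t then sgnJ J t * (A - x t) * p%:Z ^+ idx u t else 0)
    + (if s == ordS t then sgnJ J (ordS t) * cr * p%:Z ^+ idx u (ordS t) else 0).
  move=> s; case: (eqVneq s t) => [->|nt].
    case: (eqVneq t (ordS t)) => [e|ne]; last by ring.
    by rewrite -e; ring.
  by case: (eqVneq s (ordS t)) => [->|ne]; ring.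
rewrite (eq_bigr _ (fun s _ => E s)) big_split /= !sum_pick.
have -> : sgnJ J t * (A - x t) = - p%:Z.
  rewrite /A; case: ifP => h0; rewrite /sgnJ.
    by move: (hn h0) => /negbTE ->; ring.
  have hp' : p%:Z < x t by move: hr h0; lia.
  by rewrite (hP hp'); ring.
have -> : sgnJ J (ordS t) * cr = 1 by rewrite /sgnJ /cr; case: ifP.
have := keyK p u t; congr (_ %| _)%Z; ring.
Qed.

Definition eJ (f : nat) (J : {set 'I_f}) (s : 'I_f) : int := if s \in J then 0 else 1.

Lemma y0_cong (p f : nat) (J : {set 'I_f}) (c : 'I_f -> int) (u : 'I_f) :
  (p%:Z ^+ f - 1 %| W p J u (y0 p J c) - Omega p u c)%Z.
Proof.
rewrite W_re Omega_re -sumrB.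
have E : forall s : 'I_f,
  sgnJ J s * y0 p J c s * p%:Z ^+ idx u s - c s * p%:Z ^+ idx u s
  = eJ J (ord_pred s) * p%:Z ^+ idx u s - eJ J s * (p%:Z * p%:Z ^+ idx u s).
  move=> s; rewrite /y0 /sgnJ /eJ /=.
  by case: (s \in J); case: (ord_pred s \in J); ring.
rewrite (eq_bigr _ (fun s _ => E s)) sumrB.
rewrite (reindex_inj (@ordS_inj f) (F := fun s => eJ J (ord_pred s) * p%:Z ^+ idx u s)) /=.
rewrite -sumrB; apply: rpred_sum => s _; rewrite ordSK -mulrBr.
exact/dvdz_mull/keyK.
Qed.

Definition inr (p : nat) (v : int) : Prop := 1 <= v <= p%:Z.
Definition good (p f : nat) (J : {set 'I_f}) (s : 'I_f) (v : int) : Prop :=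
  if s \in J then 1 <= v <= p%:Z + 1 else -1 <= v <= p%:Z.
Definition pre (p f : nat) (J : {set 'I_f}) (s : 'I_f) (v : int) : Prop :=
  if s \in J then 1 <= v <= p%:Z else 0 <= v <= p%:Z - 1.
Definition tgt (p f : nat) (J : {set 'I_f}) (s : 'I_f) (v : int) : Prop :=
  if s \in J then 1 <= v <= p%:Z - 1 else 2 <= v <= p%:Z.

Lemma dl_other (p f : nat) (J : {set 'I_f}) x (t k : 'I_f) :
  k != t -> k != ordS t -> delta p J x t k = x k.
Proof.
move=> /negbTE h1 /negbTE h2; rewrite /delta /=; case: ifP => // _.
by rewrite h1 h2.
Qed.

Lemma dl_t (p f : nat) (J : {set 'I_f}) x (t : 'I_f) :
  t != ordS t -> delta p J x t t =
  if (1 <= x t <= p%:Z) then x t else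
  if x t <= 0 then x t + p%:Z else x t - p%:Z.
Proof.
move=> /negbTE h1; rewrite /delta /=; case: ifP => // _.
by rewrite h1 eqxx.
Qed.

Lemma dl_S (p f : nat) (J : {set 'I_f}) x (t : 'I_f) :
  t != ordS t -> delta p J x t (ordS t) =
  x (ordS t) + (if (1 <= x t <= p%:Z) then 0 else sgnJ J (ordS t)).
Proof.
move=> h1; rewrite /delta /=; case: ifP => _; first by rewrite addr0.
rewrite eqxx eq_sym (negbTE h1) /sgnJ; done.
Qed.

Lemma ne_phis f i j (t : 'I_f) : (i < f)%N -> (j < f)%N -> i <> j ->
  phis i t != phis j t.
Proof. by move=> hi hj hij; apply/eqP => /phis_inj => /(_ hi hj). Qed.

Lemma good_sign p f J (s : 'I_f) v : good p J s v ->
  (v <= 0 -> s \notin J) /\ (p%:Z < v -> s \in J).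
Proof. rewrite /good; case: (s \in J) => h; split => //; lia. Qed.

Lemma iter_main (p f : nat) (J : {set 'I_f}) n : forall (x : 'I_f -> int) (t : 'I_f),
  (1 < p)%N -> (n.+1 < f)%N -> good p J t (x t) ->
  (forall i, (0 < i < n.+1)%N -> pre p J (phis i t) (x (phis i t))) ->
  tgt p J (phis n.+1 t) (x (phis n.+1 t)) ->
  (forall i, (n.+1 < i < f)%N -> inr p (x (phis i t))) ->
  (forall s, inr p (delta_iter p J n.+1 x t s)) /\
  (forall u, (p%:Z ^+ f - 1 %| W p J u (delta_iter p J n.+1 x t) - W p J u x)%Z).
Proof.
elim: n => [|n IH] x t hp hn hg hpre htg hrest.
all: have nt : t != ordS t by apply: (@ne_phis f 0 1 t); lia.
all: have [sg1 sg2] := good_sign hg.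
all: have cong1 := fun u => step_cong u sg1 sg2.
all: have hx't : inr p (delta p J x t t)
      by rewrite dl_t //; move: hg; rewrite /good /inr;
         case: (t \in J); case: ifP => //; case: ifP => //; lia.
all: have hx'S := @dl_S p f J x t nt.
- rewrite /=; split => //.
  move=> s; rewrite -(phis_idx t s); have := idx_lt t s.
  case: (idx t s) => [|[|i]] hi; first exact: hx't.
  + rewrite /= hx'S; move: htg; rewrite /tgt /inr /sgnJ /=.
    case: (ordS t \in J); case: ifP; lia.
  + rewrite dl_other; first by apply: hrest; lia.
    * by apply: (@ne_phis f _ 0 t); lia.
    * by apply: (@ne_phis f _ 1 t); lia.
- have H1 : good p J (ordS t) (delta p J x t (ordS t)).
    rewrite hx'S; have := hpre 1%N isT; rewrite /pre /good /sgnJ /=.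
    case: (ordS t \in J); case: ifP; lia.
  have H2 : forall i, (0 < i < n.+1)%N ->
      pre p J (phis i (ordS t)) (delta p J x t (phis i (ordS t))).
    move=> i hi; rewrite phisSr dl_other.
    * by apply: hpre; lia.
    * by apply: (@ne_phis f _ 0 t); lia.
    * by apply: (@ne_phis f _ 1 t); lia.
  have H3 : tgt p J (phis n.+1 (ordS t)) (delta p J x t (phis n.+1 (ordS t))).
    rewrite phisSr dl_other //.
    * by apply: (@ne_phis f _ 0 t); lia.
    * by apply: (@ne_phis f _ 1 t); lia.
  have H4 : forall i, (n.+1 < i < f)%N -> inr p (delta p J x t (phis i (ordS t))).
    move=> i hi; rewrite phisSr.
    case: (eqVneq i.+1 f) => [->|ne]; first by rewrite phis_f.
    rewrite dl_other; first by apply: hrest; lia.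
    * by apply: (@ne_phis f _ 0 t); lia.
    * by apply: (@ne_phis f _ 1 t); lia.
  have [IH1 IH2] := IH (delta p J x t) (ordS t) hp (ltnW hn) H1 H2 H3 H4.
  split; first exact: IH1.
  move=> u; have := rpredD (IH2 u) (cong1 u).
  by rewrite /= addrA addrNK.
Qed.

Theorem lemma5p6 (p f : nat) (hp : prime p) (hf : (0 < f)%N)
  (J : {set 'I_f}) (c : 'I_f -> int)
  (hc : forall t, 1 <= c t <= p%:Z - 1)
  (t0 : 'I_f)
  (ht0 : ~~ [forall t, 0 < y0 p J c t] -> y0 p J c t0 = 0) :
  let r := rJc p J c t0 in
  (forall t, 1 <= r t <= p%:Z) /\
  (forall t, (\sum_(i < f) sgnJ J (phis i t) * r (phis i t) * p%:Z ^+ i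
              = Omega p t c %[mod (p%:Z ^+ f - 1)])%Z).
Proof.
move=> r; have hp1 : (1 < p)%N := prime_gt1 hp.
have yc := y0_cong p J c.
have ypre : forall s, pre p J s (y0 p J c s).
  move=> s; rewrite /pre /y0; have := hc s.
  by case: (s \in J); case: (ord_pred s \in J); lia.
suff [R C] : (forall s, inr p (r s)) /\
   (forall u, (p%:Z ^+ f - 1 %| W p J u r - W p J u (y0 p J c))%Z).
  split; first exact: R.
  move=> u; apply/eqP; rewrite eqz_mod_dvd.
  have := rpredD (C u) (yc u); rewrite addrA addrNK; exact.
rewrite /r /rJc; case: ifP => hall.
  split; last by move=> u; rewrite subrr rpred0.
  move=> s; have := ypre s; have := forallP hall s; rewrite /pre /inr.
  by case: (s \in J); lia.
have h0 := ht0 (negbT hall).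
have t0J : t0 \notin J.
  apply/negP => hJ; move: (ypre t0); rewrite /pre hJ h0; lia.
have sg1 : y0 p J c t0 <= 0 -> t0 \notin J by [].
have sg2 : p%:Z < y0 p J c t0 -> t0 \in J by rewrite h0; lia.
have cong1 := fun u => step_cong u sg1 sg2.
have E : delta_iter p J f (y0 p J c) t0 = delta_iter p J f.-1.+1 (y0 p J c) t0
  by rewrite prednK.
rewrite E /=; case ef : f.-1 => [|m].
  split => //=.
  have et : ordS t0 = t0.
    apply: val_inj; change (nat_of_ord (ordS t0) = nat_of_ord t0); rewrite val_ordS; have := ltn_ord t0; case: ifP; lia.
  move=> s; have -> : s = t0.
    apply: val_inj; change (nat_of_ord s = nat_of_ord t0); have := ltn_ord s; have := ltn_ord t0; lia.
  rewrite /delta /= h0 et /inr.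
  rewrite (negbTE t0J) ler10 /= eqxx; lia.
have nt : t0 != ordS t0 by apply: (@ne_phis f 0 1 t0); lia.
have hx'S := @dl_S p f J (y0 p J c) t0 nt.
have H1 : good p J (ordS t0) (delta p J (y0 p J c) t0 (ordS t0)).
  rewrite hx'S h0; have := ypre (ordS t0); rewrite /pre /good /sgnJ /=.
  case: (ordS t0 \in J); lia.
have H2 : forall i, (0 < i < m.+1)%N ->
    pre p J (phis i (ordS t0)) (delta p J (y0 p J c) t0 (phis i (ordS t0))).
  move=> i hi; rewrite phisSr dl_other.
  * by apply: ypre.
  * by apply: (@ne_phis f _ 0 t0); lia.
  * by apply: (@ne_phis f _ 1 t0); lia.
have H3 : tgt p J (phis m.+1 (ordS t0))
     (delta p J (y0 p J c) t0 (phis m.+1 (ordS t0))).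
  have em : m.+2 = f by lia.
  rewrite phisSr em phis_f dl_t // h0 /tgt (negbTE t0J).
  rewrite ler10 /= lexx; lia.
have H4 : forall i, (m.+1 < i < f)%N ->
    inr p (delta p J (y0 p J c) t0 (phis i (ordS t0))) by move=> i hi; lia.
have [IH1 IH2] := iter_main hp1 (ltac:(lia) : (m.+1 < f)%N) H1 H2 H3 H4.
split; first exact: IH1.
move=> u; have := rpredD (IH2 u) (cong1 u).
by rewrite /= addrA addrNK.
Qed.
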